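(* Let $d\ge1$ and $k\ge d-1$ be integers. Then every injective function $f\colon\mathbb{R}^{k+1}\to\mathbb{R}^d$ satisfies $\alpha(f)\ge c_{d-1,k}$, and every injective function $f\colon S^k\to\mathbb{R}^d$ satisfies $\alpha(f)\ge c_{d-1,k}$ (functions not assumed continuous).
   Context: For a topological space $X$, $\mathrm{Conf}_2(X)=\{(x,y)\in X\times X: x\neq y\}$ with the subspace topology. Spheres carry the geodesic metric $d(u,v)=\arccos\langle u,v\rangle$. For a topological space $X$ and a metric space $Y$, $\delta(g)=\inf\{\delta\ge 0 : \text{for every } x\in X \text{ there is an open neighborhood } U_x \text{ of } x \text{ with } \operatorname{diam}(g(U_x))\le\delta\}$. For injective $f\colon X\to\mathbb{R}^d$, $\Phi_f(x,y)=\frac{f(x)-f(y)}{\|f(x)-f(y)\|}\in S^{d-1}$ and $\alpha(f)=\delta(\Phi_f)$. For a metric space $Y$ and $r\ge0$, $\mathrm{VR}(Y;r)$ is the Vietoris–Rips complex (simplices: finite subsets of diameter $\le r$), geometrically realized. For $k\ge n\ge0$, $c_{n,k}=\inf\{r\ge0:\text{there is a continuous } \mathbb{Z}/2\text{-equivariant map } S^k\to\mathrm{VR}(S^n;r)\}$, where $\mathbb{Z}/2$ acts antipodally on $S^k$ and on $\mathrm{VR}(S^n;r)$ via the antipodal map on vertices. *)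

(* Defs.v *)
From HB Require Import structures.
From mathcomp Require Import all_boot all_order all_algebra.
From mathcomp Require Import all_classical all_reals all_analysis.
Set Implicit Arguments. Unset Strict Implicit. Unset Printing Implicit Defensive.
Import Order.TTheory GRing.Theory Num.Theory.
Local Open Scope classical_set_scope.
Local Open Scope ring_scope.

Section Defs.
Variable R : realType.

Definition dot (m : nat) (u v : 'rV[R]_m) : R := \sum_(i < m) u 0 i * v 0 i.
Definition enorm (m : nat) (u : 'rV[R]_m) : R := Num.sqrt (dot u u).

(* unit sphere in R^m, i.e. S^(m-1) *)
Definition sphere (m : nat) : set 'rV[R]_m := [set u | dot u u = 1].

Definition gdist (m : nat) (u v : 'rV[R]_m) : R := acos (dot u v).

Definition subopen (T : Type) (dist : T -> T -> R) (A U : set T) : Prop :=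
  U `<=` A /\
  forall x, U x -> exists2 e : R, 0 < e &
    forall y, A y -> dist x y < e -> U y.

Definition edist (m : nat) (x y : 'rV[R]_m) : R := enorm (x - y).
Definition pdist (m : nat) (p q : 'rV[R]_m * 'rV[R]_m) : R :=
  Num.max (edist p.1 q.1) (edist p.2 q.2).

Definition Conf2 (m : nat) (X : set 'rV[R]_m) : set ('rV[R]_m * 'rV[R]_m) :=
  [set p | X p.1 /\ X p.2 /\ p.1 <> p.2].

Definition diam_le (S : Type) (dS : S -> S -> R) (B : set S) (r : R) : Prop :=
  forall u v, B u -> B v -> dS u v <= r.

Definition delta (T S : Type) (distT : T -> T -> R) (A : set T)
    (dS : S -> S -> R) (g : T -> S) : R :=
  inf [set r : R | 0 <= r /\
        forall x, A x -> exists U : set T,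
          [/\ subopen distT A U, U x & diam_le dS (g @` U) r]].

Definition Phi (m d : nat) (f : 'rV[R]_m -> 'rV[R]_d) (p : 'rV[R]_m * 'rV[R]_m)
  : 'rV[R]_d := (enorm (f p.1 - f p.2))^-1 *: (f p.1 - f p.2).

Definition alpha (m d : nat) (X : set 'rV[R]_m) (f : 'rV[R]_m -> 'rV[R]_d) : R :=
  delta (@pdist m) (Conf2 X) (@gdist d) (Phi f).

Definition VRsimplex (n : nat) (r : R) (s : seq 'rV[R]_n.+1) : Prop :=
  (forall v, v \in s -> sphere v) /\
  (forall u v, u \in s -> v \in s -> gdist u v <= r).

(* A point of |VR(S^n;r)| is given by its barycentric coordinates t : vertices -> R,
   nonnegative, summing to 1, supported on a (finite) simplex. *)
Definition supported_on (n : nat) (t : 'rV[R]_n.+1 -> R) (s : seq 'rV[R]_n.+1) :=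
  forall v, t v != 0 -> v \in s.

Definition in_simplex (n : nat) (t : 'rV[R]_n.+1 -> R) (s : seq 'rV[R]_n.+1) :=
  [/\ supported_on t s, (forall v, 0 <= t v) & \sum_(v <- undup s) t v = 1].

Definition VRpoint (n : nat) (r : R) (t : 'rV[R]_n.+1 -> R) : Prop :=
  exists s, @VRsimplex n r s /\ in_simplex t s.

(* weak (coherent) topology: U is open iff its trace on every closed simplex is
   open in that simplex (with its Euclidean topology in barycentric coordinates) *)
Definition VRopen (n : nat) (r : R) (U : set ('rV[R]_n.+1 -> R)) : Prop :=
  U `<=` @VRpoint n r /\
  forall s, @VRsimplex n r s -> forall t, U t -> in_simplex t s ->
    exists2 e : R, 0 < e & forall t', in_simplex t' s ->
      (forall v, v \in s -> `|t' v - t v| < e) -> U t'.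

Definition VRcontinuous (k n : nat) (r : R)
    (g : 'rV[R]_k.+1 -> ('rV[R]_n.+1 -> R)) : Prop :=
  (forall x, sphere x -> @VRpoint n r (g x)) /\
  forall U, @VRopen n r U -> subopen (@edist k.+1) (@sphere k.+1) [set x | sphere x /\ U (g x)].

Definition antipodal_equivariant (k n : nat)
    (g : 'rV[R]_k.+1 -> ('rV[R]_n.+1 -> R)) : Prop :=
  forall x, sphere x -> forall v, g (- x) v = g x (- v).

Definition c_nk (n k : nat) : R :=
  inf [set r : R | 0 <= r /\ exists g : 'rV[R]_k.+1 -> ('rV[R]_n.+1 -> R),
         @VRcontinuous k n r g /\ antipodal_equivariant g].

End Defs.

(* Main.v *)
Require Import Defs.
From HB Require Import structures.
From mathcomp Require Import all_boot all_order all_algebra.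
From mathcomp Require Import all_classical all_reals all_analysis.
From mathcomp Require Import ring lra.
Import Order.TTheory GRing.Theory Num.Theory.
Import numFieldTopology.Exports numFieldNormedType.Exports.
Local Open Scope classical_set_scope.
Local Open Scope ring_scope.

Section Basic.
Variable R : realType.

Lemma acos_le_pi (x : R) : acos x <= pi.
Proof.
rewrite unlock; case: xgetP => [y -> [] /andP[] //|_].
rewrite /point /=; exact: pi_ge0.
Qed.

Lemma dotNN m (u v : 'rV[R]_m) : dot (- u) (- v) = dot u v.
Proof. by apply: eq_bigr => i _; rewrite !mxE mulrNN. Qed.

Lemma dotZZ m (a : R) (u : 'rV[R]_m) : dot (a *: u) (a *: u) = a ^+ 2 * dot u u.
Proof.
rewrite /dot mulr_sumr; apply: eq_bigr => i _; rewrite !mxE.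
by rewrite expr2 mulrACA.
Qed.

Lemma dot_ge0 m (u : 'rV[R]_m) : 0 <= dot u u.
Proof. by apply: sumr_ge0 => i _; rewrite -expr2 sqr_ge0. Qed.

Lemma dot_eq0 m (u : 'rV[R]_m) : dot u u = 0 -> u = 0.
Proof.
move=> /eqP; rewrite psumr_eq0 => [/allP H|i _]; last by rewrite -expr2 sqr_ge0.
apply/rowP => i; rewrite mxE.
have := H i (mem_index_enum i); rewrite /= -expr2 sqrf_eq0 => /eqP ->//.
Qed.

Lemma enormN m (u : 'rV[R]_m) : enorm (- u) = enorm u.
Proof. by rewrite /enorm dotNN. Qed.

Lemma sphereN m (u : 'rV[R]_m) : sphere u -> sphere (- u).
Proof. by rewrite /sphere /= dotNN. Qed.

Lemma sphere_neq0 m (u : 'rV[R]_m) : sphere u -> u != 0.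
Proof.
rewrite /sphere /= => H; apply/eqP => u0; move: H; rewrite u0 /dot.
rewrite big1 => [/eqP|i _]; rewrite 1?eq_sym ?oner_eq0 //. by rewrite [X in X * _]mxE mul0r.
Qed.

Lemma sphere_Phi m (u : 'rV[R]_m) : u != 0 -> sphere ((enorm u)^-1 *: u).
Proof.
move=> u0; rewrite /sphere /= dotZZ /enorm.
have dp : 0 < dot u u.
  rewrite lt_neqAle dot_ge0 andbT eq_sym; apply/eqP => /dot_eq0 H.
  by rewrite H eqxx in u0.
by rewrite exprVn sqr_sqrtr ?dot_ge0 // mulVf // gt_eqF.
Qed.

Lemma coord_le_enorm m (u : 'rV[R]_m) i : `|u 0 i| <= enorm u.
Proof.
rewrite /enorm -(sqrtr_sqr (u 0 i)) ler_sqrt ?dot_ge0 //.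
rewrite /dot (bigD1 i) //= -expr2 lerDl.
by apply: sumr_ge0 => j _; rewrite -expr2 sqr_ge0.
Qed.

Lemma coord_le_norm m (u : 'rV[R]_m) i : `|u 0 i| <= `|u|.
Proof.
rewrite [X in _ <= X]/Num.Def.normr /= mx_normrE.
by apply/bigmax_geP; right; exists (0, i).
Qed.

Lemma norm_le_enorm m (u : 'rV[R]_m) : `|u| <= enorm u.
Proof.
rewrite [X in X <= _]/Num.Def.normr /= mx_normrE.
apply/bigmax_leP; split; first by rewrite sqrtr_ge0.
move=> [a i] _ /=; rewrite (ord1 a); exact: coord_le_enorm.
Qed.

Lemma enorm_le_norm m (u : 'rV[R]_m) : enorm u <= m%:R * `|u|.
Proof.
rewrite /enorm -(ger0_norm (_ : 0 <= m%:R * `|u|)); last by rewrite mulr_ge0.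
rewrite -sqrtr_sqr ler_sqrt ?sqr_ge0 //.
apply: (@le_trans _ _ (\sum_(i < m) `|u|^+2)).
  apply: ler_sum => i _; rewrite -expr2 -real_normK ?num_real //.
  by rewrite lerXn2r ?nnegrE ?coord_le_norm.
rewrite sumr_const card_ord exprMn -[leLHS]mulr_natl; apply: ler_wpM2r; first exact: sqr_ge0.
case: m u => [|m] u; first by rewrite expr2 mul0r.
by rewrite expr2 ler_peMr // ?ler1n.
Qed.

End Basic.

Lemma cvg_subc (R : numFieldType) m (c : 'rV[R]_m) (y : 'rV[R]_m) :
  (fun y : 'rV[R]_m => y - c) @ y --> y - c.
Proof.
have := @cvgB R 'rV[R]_m _ (nbhs y) _ id (fun=> c) y c cvg_id (cvg_cst c).
exact.
Qed.

Lemma cont_normsub (R : realType) m (c : 'rV[R]_m) :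
  continuous (fun y : 'rV[R]_m => `|y - c|).
Proof.
move=> y.
have h := @norm_continuous R 'rV[R]_m (y - c).
have := cvg_comp _ _ (@cvg_subc _ _ c y) h. exact.
Qed.

Section Cont.
Variable R : realType.

Lemma cont_sum (T : topologicalType) (I : eqType) (s : seq I) (F : I -> T -> R) (x : T) :
  (forall i : I, i \in s -> F i @ x --> F i x) ->
  (fun y => \sum_(i <- s) F i y) @ x --> \sum_(i <- s) F i x.
Proof.
elim: s => [|a s IH] H.
  under eq_fun do rewrite big_nil.
  rewrite big_nil; exact: cvg_cst.
under eq_fun do rewrite big_cons.
rewrite big_cons; apply: cvgD.
  exact: H (mem_head _ _).
by apply: IH => i hi; apply: H; rewrite in_cons hi orbT.
Qed.

Lemma cont_div (T : topologicalType) (F G : T -> R) (x : T) :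
  F @ x --> F x -> G @ x --> G x -> G x != 0 ->
  (fun y => F y / G y) @ x --> F x / G x.
Proof.
move=> hF hG hGx; apply: cvgM => //; exact: cvgV.
Qed.

Lemma cont_hat m (c : 'rV[R]_m) (a : R) :
  continuous (fun y : 'rV[R]_m => Num.max 0 (a - `|y - c|)).
Proof.
have h1 : continuous (fun y : 'rV[R]_m => a - `|y - c|).
  move=> y; have := @cvgB R R _ (nbhs y) _ (fun=> a) (fun y => `|y - c|) a `|y - c| (cvg_cst a) (@cont_normsub _ _ c y).
  exact.
apply: max_fun_continuous => //; exact: cst_continuous.
Qed.

Lemma cont_coord m i : continuous (fun y : 'rV[R]_m => y 0 i).
Proof. exact: coord_continuous. Qed.

End Cont.


Lemma dot_cont (R : realType) m : continuous (fun u : 'rV[R]_m => dot u u).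
Proof.
move=> u; rewrite /dot.
have H : forall i, i \in index_enum 'I_m ->
    (fun v : 'rV[R]_m => v 0 i * v 0 i) @ u --> u 0 i * u 0 i.
  move=> i _; have h := @coord_continuous R 1 m 0 i u.
  have := cvgM h h; exact.
have := @cont_sum R _ _ _ _ _ H; exact.
Qed.

Lemma sphere_closed (R : realType) m : closed (@sphere R m).
Proof.
have -> : @sphere R m = (fun u : 'rV[R]_m => dot u u) @^-1` [set x | x = 1] by [].
move: (@dot_cont R m) => /continuous_closedP; apply; exact: closed_eq.
Qed.

Lemma sphere_compact (R : realType) m : compact (@sphere R m).
Proof.
apply: bounded_closed_compact; last exact: sphere_closed.
rewrite /bounded_near.
apply: filterS (@nbhs_pinfty_ge R 1 (num_real 1)) => M M1 x sx /=.
apply: le_trans (@norm_le_enorm _ _ x) _.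
by rewrite /enorm sx sqrtr1.
Qed.


Section Core.
Variables (R : realType) (n k : nat) (r : R) (G : 'rV[R]_k.+1 -> 'rV[R]_n.+1).
Hypothesis r0 : 0 <= r.
Hypothesis GS : forall x, sphere x -> sphere (G x).
Hypothesis GN : forall x, sphere x -> G (- x) = - G x.

Definition Ploc (x : 'rV[R]_k.+1) (rho : R) := forall y z, sphere y -> sphere z ->
  `|x - y| < rho -> `|x - z| < rho -> gdist (G y) (G z) <= r.

Variable rho : 'rV[R]_k.+1 -> R.
Hypothesis rho_gt0 : forall x, 0 < rho x.
Hypothesis rhoN : forall x, rho (- x) = rho x.
Hypothesis rhoP : forall x, sphere x -> Ploc x (rho x).

Variable C : seq 'rV[R]_k.+1.
Hypothesis Csph : forall c, c \in C -> sphere c.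
Hypothesis Ccov : forall y, sphere y -> exists2 c, c \in C & `|y - c| < rho c / 4.

Definition L := C ++ map -%R C.

Lemma Lsph c : c \in L -> sphere c.
Proof.
rewrite mem_cat => /orP[/Csph //|/mapP[c' /Csph h ->]]; exact: sphereN.
Qed.
Arguments Lsph [c].

Lemma LN : perm_eq L (map -%R L).
Proof.
have e : map (-%R \o -%R) C = C.
  by rewrite -[RHS]map_id; apply: eq_map => x /=; exact: opprK.
by rewrite /L map_cat -map_comp e perm_catC.
Qed.

Definition phi (c y : 'rV[R]_k.+1) : R := Num.max 0 (rho c / 4 - `|y - c|).
Definition Phi (y : 'rV[R]_k.+1) : R := \sum_(c <- L) phi c y.
Definition w (c y : 'rV[R]_k.+1) : R := phi c y / Phi y.
Definition gmap (y : 'rV[R]_k.+1) (v : 'rV[R]_n.+1) : R :=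
  \sum_(c <- L) w c y * (v == G c)%:R.

Lemma phi_ge0 c y : 0 <= phi c y.
Proof. by rewrite /phi le_max lexx. Qed.

Lemma Phi_gt0 y : sphere y -> 0 < Phi y.
Proof.
move=> /Ccov [c cC hc].
have cL : c \in L by rewrite mem_cat cC.
rewrite /Phi (perm_big _ (perm_to_rem cL)) big_cons.
apply: lt_le_trans (_ : 0 < phi c y) _.
  by rewrite /phi lt_max subr_gt0 hc orbT.
by rewrite lerDl; apply: sumr_ge0 => i _; exact: phi_ge0.
Qed.

Lemma w_ge0 c y : 0 <= w c y.
Proof.
by rewrite /w divr_ge0 ?phi_ge0 // /Phi sumr_ge0 // => i _; exact: phi_ge0.
Qed.

Lemma phiN c y : phi (- c) (- y) = phi c y.
Proof. by rewrite /phi rhoN -opprD normrN. Qed.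

Lemma PhiN y : Phi (- y) = Phi y.
Proof.
rewrite /Phi (perm_big _ LN) big_map; apply: eq_bigr => c _.
by rewrite phiN.
Qed.

Lemma gmap_equiv : antipodal_equivariant gmap.
Proof.
move=> x sx v; rewrite /gmap (perm_big _ LN) big_map.
apply: eq_big_seq => c cL.
rewrite /w PhiN phiN (GN _ (Lsph cL)).
have -> : (v == - G c) = (- v == G c) by apply/eqP/eqP => [->|<-]; rewrite opprK.
by [].
Qed.

Definition sx (x : 'rV[R]_k.+1) := [seq G c | c <- L & `|x - c| < rho c / 2].

Lemma sx_simplex x : VRsimplex r (sx x).
Proof.
split.
  by move=> v /mapP [c]; rewrite mem_filter => /andP [_ cL] ->; exact: GS _ (Lsph cL).
move=> u v /mapP [a]; rewrite mem_filter => /andP [ha aL] ->.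
move=> /mapP [b]; rewrite mem_filter => /andP [hb bL] ->.
have sa := Lsph aL; have sb := Lsph bL.
have tri : `|a - b| < rho a / 2 + rho b / 2.
  apply: le_lt_trans (ler_distD x a b) _.
  by rewrite distrC ltrD.
have ra := rho_gt0 a; have rb := rho_gt0 b.
case: (leP (rho b) (rho a)) => h.
  apply: (rhoP _ sa) => //; first by rewrite subrr normr0.
  by apply: lt_le_trans tri _; lra.
apply: (rhoP _ sb) => //; last by rewrite subrr normr0.
by rewrite distrC; apply: lt_le_trans tri _; lra.
Qed.

Lemma sum_ind (s : seq 'rV[R]_n.+1) a : uniq s ->
  \sum_(v <- s) ((v == a)%:R : R) = (a \in s)%:R.
Proof.
move=> us; case: (boolP (a \in s)) => ha.
  rewrite (bigD1_seq a) //= eqxx big1 ?addr0 // => v /negPf -> //.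
by rewrite big1_seq // => v /andP [_ hv]; case: eqP => // e; rewrite -e hv in ha.
Qed.

Lemma gmap_simplex x y : sphere y ->
  (forall c, c \in L -> phi c y != 0 -> `|x - c| < rho c / 2) ->
  in_simplex (gmap y) (sx x).
Proof.
move=> sy H; have Pp := Phi_gt0 _ sy.
have key : forall c, c \in L -> w c y != 0 -> G c \in sx x.
  move=> c cL; rewrite /w mulf_eq0 negb_or => /andP [hc _].
  by apply: map_f; rewrite mem_filter H // cL.
split.
- move=> v; apply: contraR => vs; apply/eqP; apply: big1_seq => c /andP [_ cL].
  case: (eqVneq (w c y) 0) => [->|hc]; first by rewrite mul0r.
  case: eqP => [ev|_]; last by rewrite mulr0.
  by move: (key c cL hc); rewrite -ev (negPf vs).
- move=> v; apply: sumr_ge0 => c _; apply: mulr_ge0; [exact: w_ge0 | exact: ler0n].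
- rewrite /gmap exchange_big /=.
  rewrite (eq_big_seq (fun c => w c y)).
    by rewrite /w -mulr_suml -/(Phi y) divff // gt_eqF.
  move=> c cL; rewrite -mulr_sumr sum_ind ?undup_uniq // mem_undup.
  case: (eqVneq (w c y) 0) => [->|hc]; first by rewrite mul0r.
  by rewrite key // mulr1.
Qed.

Lemma phi_neq0 c y : phi c y != 0 -> `|y - c| < rho c / 4.
Proof.
move=> h; have : 0 < phi c y by rewrite lt_neqAle eq_sym h phi_ge0.
by rewrite /phi lt_max ltxx /= subr_gt0.
Qed.

Lemma phi_cont c x : phi c @ x --> phi c x.
Proof. have := @cont_hat R _ c (rho c / 4) x; exact. Qed.

Lemma Phi_cont x : Phi @ x --> Phi x.
Proof.
have := @cont_sum R _ _ L phi x (fun c _ => phi_cont c x); exact.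
Qed.

Lemma w_cont c x : sphere x -> w c @ x --> w c x.
Proof.
move=> sx; have := @cont_div R _ (phi c) Phi x (phi_cont c x) (Phi_cont x).
by rewrite gt_eqF ?Phi_gt0 //; apply.
Qed.

Lemma h_cont x : sphere x ->
  (fun y => \sum_(c <- L) `|w c y - w c x|) @ x --> \sum_(c <- L) `|w c x - w c x|.
Proof.
move=> sx; apply: cont_sum => c _.
have := cvg_norm (cvgB (w_cont c _ sx) (cvg_cst (w c x))); exact.
Qed.

Lemma near_all (T : Type) (F : set_system T) (FF : Filter F) (I : eqType) (s : seq I)
  (P : I -> T -> Prop) : (forall i, i \in s -> F (P i)) ->
  F (fun y => forall i, i \in s -> P i y).
Proof.
elim: s => [|a s IH] H.
  by apply: filterE => y i; rewrite in_nil.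
have Ha := H a (mem_head _ _).
have Hs : F (fun y => forall i, i \in s -> P i y).
  by apply: IH => i hi; apply: H; rewrite in_cons hi orbT.
apply: filterS2 Ha Hs => y ha hs i; rewrite in_cons => /orP [/eqP -> //|]; exact: hs.
Qed.

Lemma near_good x : sphere x -> forall e : R, 0 < e ->
  \forall y \near x, (forall c, c \in L -> phi c y != 0 -> `|x - c| < rho c / 2) /\
    \sum_(c <- L) `|w c y - w c x| < e.
Proof.
move=> sx e e0.
have A : \forall y \near x, (forall c, c \in L -> phi c y != 0 -> `|x - c| < rho c / 2).
  apply: near_all => c cL.
  have rc := rho_gt0 c.
  have := @near_ball R _ x (rho c / 4) ltac:(lra).
  apply: filterS => y; rewrite -ball_normE /ball_ /= => hxy /phi_neq0 hyc.
  apply: le_lt_trans (ler_distD y x c) _.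
  by apply: lt_le_trans (ltrD hxy hyc) _; lra.
have B : \forall y \near x, _ := cvgr_dist_lt _ _ (h_cont _ sx) _ e0.
have {}B := B (nbhs_filter x). apply: filterS2 A B => y ha hb; split => //.
have e1 : \sum_(c <- L) `|w c x - w c x| = 0.
  by rewrite big1 // => c _; rewrite subrr normr0.
move: hb; rewrite e1 sub0r normrN => hb.
by apply: le_lt_trans (ler_norm _) hb.
Qed.

Lemma gmap_self x : sphere x -> in_simplex (gmap x) (sx x).
Proof.
move=> hx; apply: gmap_simplex => // c _ /phi_neq0 h.
have rc := rho_gt0 c; by apply: lt_trans h _; lra.
Qed.

Lemma gmap_cont : VRcontinuous r gmap.
Proof.
split.
  move=> x hx; exists (sx x); split; [exact: sx_simplex | exact: gmap_self].
move=> U [HU1 HU2]; split; first by move=> x [].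
move=> x [hx Ux].
have [e e0 He] := HU2 (sx x) (sx_simplex x) (gmap x) Ux (gmap_self _ hx).
have /nbhs_ballP [d d0 Hd] := near_good _ hx _ e0.
exists d => // y sy hxy; split => //.
have bxy : ball x d y.
  rewrite -ball_normE /ball_ /=; have := @norm_le_enorm _ _ (x - y); rewrite /edist in hxy. move=> h; exact: le_lt_trans h hxy.
have [H1 H2] := Hd y bxy.
apply: He; first exact: gmap_simplex.
move=> v _; rewrite /gmap -sumrB.
apply: le_lt_trans (ler_norm_sum _ _ _) _.
apply: le_lt_trans H2.
apply: ler_sum => c _; rewrite -mulrBl normrM.
have h : `|((v == G c)%:R : R)| <= 1 by case: eqP; rewrite ?normr0 ?normr1.
by rewrite -[X in _ <= X]mulr1; apply: ler_wpM2l.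
Qed.

End Core.

Lemma core_exists (R : realType) n k (r : R) (G : 'rV[R]_k.+1 -> 'rV[R]_n.+1) :
  (forall x, sphere x -> sphere (G x)) ->
  (forall x, sphere x -> G (- x) = - G x) ->
  (forall x, sphere x -> exists2 e : R, 0 < e & forall y z, sphere y -> sphere z ->
      Defs.edist x y < e -> Defs.edist x z < e -> gdist (G y) (G z) <= r) ->
  exists g : 'rV[R]_k.+1 -> ('rV[R]_n.+1 -> R), VRcontinuous r g /\ antipodal_equivariant g.
Proof.
move=> GS GN Gloc.
have Gl : forall x : 'rV[R]_k.+1, exists rho : R, 0 < rho /\ (sphere x -> Ploc R n k r G x rho).
  move=> x; case: (pselect (sphere x)) => hx; last by exists 1; split.
  have [e e0 He] := Gloc x hx.
  have kp : 0 < (k.+1)%:R :> R by rewrite ltr0n.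
  exists (e / (k.+1)%:R); split; first by rewrite divr_gt0.
  move=> _ y z sy sz hy hz; apply: He => //.
    have h1 : (k.+1)%:R * `|x - y| < e by rewrite mulrC -ltr_pdivlMr.
    exact: le_lt_trans (@enorm_le_norm R k.+1 (x - y)) h1.
  have h1 : (k.+1)%:R * `|x - z| < e by rewrite mulrC -ltr_pdivlMr.
  exact: le_lt_trans (@enorm_le_norm R k.+1 (x - z)) h1.
have [rho0 Hrho0] := choice Gl.
pose rho x := Num.min (rho0 x) (rho0 (- x)).
have rho_gt0 : forall x, 0 < rho x.
  by move=> x; rewrite /rho lt_min (Hrho0 x).1 (Hrho0 (- x)).1.
have rhoN : forall x, rho (- x) = rho x by move=> x; rewrite /rho opprK minC.
have rhoP : forall x, sphere x -> Ploc R n k r G x (rho x).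
  move=> x hx y z sy sz h1 h2.
  have hm : rho x <= rho0 x by rewrite /rho ge_min lexx.
  apply: (Hrho0 x).2 => //; [exact: lt_le_trans h1 hm | exact: lt_le_trans h2 hm].
have := @sphere_compact R k.+1; rewrite compact_cover.
move=> /(_ _ (@sphere R k.+1) (fun c => ball c (rho c / 4))).
case => [c _ | y sy | D DS Dcov].
- exact: ball_open.
- by exists y => //; apply: ballxx; rewrite divr_gt0 ?rho_gt0.
pose C : seq 'rV[R]_k.+1 := finmap.enum_fset D.
have Csph : forall c, c \in C -> sphere c.
  by move=> c /DS; rewrite inE.
have Ccov : forall y, sphere y -> exists2 c, c \in C & `|y - c| < rho c / 4.
  move=> y /Dcov [c /= cD hc]; exists c => //.
  by rewrite distrC; move: hc; rewrite -ball_normE.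
exists (gmap R n k G rho C); split.
  exact: (@gmap_cont R n k r G GS rho rho_gt0 rhoP C Csph Ccov).
exact: (@gmap_equiv R n k G GN rho rhoN C Csph).
Qed.

Lemma neq_opp (R : realType) m (x : 'rV[R]_m) : sphere x -> x <> - x.
Proof.
move=> sx e; have := @sphere_neq0 _ _ _ sx; apply/negP; rewrite negbK; apply/eqP.
apply/rowP => i; rewrite [RHS]mxE.
have : x 0 i = - x 0 i by rewrite {1}e mxE.
move/eqP; rewrite -subr_eq0 opprK -mulr2n mulrn_eq0 /= => /eqP //.
Qed.

Lemma main_gen (R : realType) (n k : nat) (X : set 'rV[R]_k.+1)
    (f : 'rV[R]_k.+1 -> 'rV[R]_n.+1) :
  (forall x, sphere x -> X x) ->
  (forall x y, X x -> X y -> f x = f y -> x = y) ->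
  c_nk R n k <= alpha X f.
Proof.
move=> SX finj.
rewrite /c_nk /alpha /delta.
set Sc := [set r : R | _].
set Sa := [set r : R | _].
have Sc_lb : has_lbound Sc by exists 0 => y [].
have SaSc : Sa `<=` Sc.
  move=> r [r0 Hr]; split => //.
  pose G x := Defs.Phi f (x, - x).
  have fneq : forall x, sphere x -> f x - f (- x) != 0.
    move=> x sx; rewrite subr_eq0; apply/eqP => /finj.
    by move=> /(_ (SX _ sx) (SX _ (@sphereN _ _ _ sx))); apply: (@neq_opp R).
  apply: (@core_exists R n k r G).
  - by move=> x sx; rewrite /G /Defs.Phi /=; apply: sphere_Phi; exact: fneq.
  - move=> x sx; rewrite /G /Defs.Phi /= opprK -opprB enormN scalerN //.
  - move=> x sx.
    have hp : Conf2 X (x, - x).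
      split; first exact: SX.
      split; first exact: SX _ (@sphereN _ _ _ sx).
      exact: (@neq_opp R _ _ sx).
    have [U [[UC Uo] Ux Ud]] := Hr _ hp.
    have [e e0 He] := Uo _ Ux.
    exists e => // y z sy sz hy hz.
    have hq : forall w, sphere w -> Defs.edist x w < e -> U (w, - w).
      move=> w sw hw; apply: He.
        split; first exact: SX.
        split; first exact: SX _ (@sphereN _ _ _ sw).
        exact: (@neq_opp R _ _ sw).
      rewrite /pdist /= (_ : Defs.edist (- x) (- w) = Defs.edist x w) ?maxxx //.
      by rewrite /Defs.edist -opprD enormN.
    apply: Ud; [exists (y, - y) => //; exact: hq | exists (z, - z) => //; exact: hq].
have Sa0 : Sa !=set0.
  exists pi; split; first exact: pi_ge0.
  move=> p hp; exists (Conf2 X); split => //.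
    by split => // q hq; exists 1 => // ? ? _.
  by move=> u v _ _; exact: acos_le_pi.
apply: lb_le_inf Sa0 _ => y /SaSc Sy.
exact: ge_inf Sc_lb _ Sy.
Qed.

Theorem corollary3p6 (R : realType) (d k : nat) :
  (1 <= d)%N -> (d.-1 <= k)%N ->
  (forall f : 'rV[R]_k.+1 -> 'rV[R]_d, injective f ->
     c_nk R d.-1 k <= alpha setT f) /\
  (forall f : 'rV[R]_k.+1 -> 'rV[R]_d, {in sphere (R:=R) (m:=k.+1) &, injective f} ->
     c_nk R d.-1 k <= alpha (sphere (m:=k.+1)) f).
Proof.
case: d => // d _ _; split => f finj.
  by apply: main_gen => // x y _ _; exact: finj.
apply: main_gen => // x y sx sy; apply: finj; rewrite inE //.
Qed.
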